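(* Let $G$ be a finite non-abelian group with $G/Z(G)\cong\mathbb{Z}_p\times\mathbb{Z}_p$ for a prime $p$. Then $\Gamma_G$ is neither hyperenergetic, L-hyperenergetic nor Q-hyperenergetic.
   Context: The NCCC-graph $\Gamma_G$ of a finite non-abelian group $G$ with center $Z(G)$ has vertex set $\{x^G: x\in G\setminus Z(G)\}$ ($x^G$ the conjugacy class of $x$), distinct vertices $x^G,y^G$ adjacent iff $x'y'\neq y'x'$ for all $x'\in x^G,y'\in y^G$. For a simple graph $\mathcal G$ with adjacency matrix $A$, degree matrix $D$, $L=D-A$, $Q=D+A$: $E(\mathcal G)=\sum|\lambda|$ over eigenvalues of $A$; with $\Delta=2|E(\mathcal G)|/|V(\mathcal G)|$, $LE(\mathcal G)=\sum|\beta-\Delta|$ over eigenvalues $\beta$ of $L$, $SE(\mathcal G)=\sum|\gamma-\Delta|$ over eigenvalues $\gamma$ of $Q$ (with multiplicity). For $N=|V(\mathcal G)|$ and $K_N$ the complete graph, $E(K_N)=LE(K_N)=SE(K_N)=2(N-1)$. $\mathcal G$ is hyperenergetic if $E(\mathcal G)>E(K_N)$, L-hyperenergetic if $LE(\mathcal G)>LE(K_N)$, Q-hyperenergetic if $SE(\mathcal G)>SE(K_N)$. *)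

(* Defs.v *)
From mathcomp Require Import all_boot all_order all_algebra all_fingroup all_solvable all_field.
Set Implicit Arguments. Unset Strict Implicit. Unset Printing Implicit Defensive.
Import Order.TTheory GRing.Theory Num.Theory.
Local Open Scope ring_scope.

(* the eigenvalues (with algebraic multiplicity) of A: the roots of its
   characteristic polynomial, which splits over the algebraically closed algC *)
Definition spectrum (N : nat) (A : 'M[algC]_N) : seq algC :=
  sval (closed_field_poly_normal (char_poly A)).

Definition deg_mx (N : nat) (A : 'M[algC]_N) : 'M[algC]_N :=
  diag_mx (\row_i \sum_j A i j).

Definition lap_mx (N : nat) (A : 'M[algC]_N) := deg_mx A - A.
Definition slap_mx (N : nat) (A : 'M[algC]_N) := deg_mx A + A.

(* average degree  Delta = 2|E| / |V| = (sum of degrees) / N *)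
Definition avg_deg (N : nat) (A : 'M[algC]_N) : algC :=
  (\sum_i \sum_j A i j) / N%:R.

Definition energy (N : nat) (A : 'M[algC]_N) : algC :=
  \sum_(l <- spectrum A) `|l|.
Definition lap_energy (N : nat) (A : 'M[algC]_N) : algC :=
  \sum_(b <- spectrum (lap_mx A)) `|b - avg_deg A|.
Definition slap_energy (N : nat) (A : 'M[algC]_N) : algC :=
  \sum_(g <- spectrum (slap_mx A)) `|g - avg_deg A|.

Definition complete_adj (N : nat) : 'M[algC]_N := \matrix_(i, j) (i != j)%:R.

Definition hyperenergetic (N : nat) (A : 'M[algC]_N) :=
  energy (complete_adj N) < energy A.
Definition L_hyperenergetic (N : nat) (A : 'M[algC]_N) :=
  lap_energy (complete_adj N) < lap_energy A.
Definition Q_hyperenergetic (N : nat) (A : 'M[algC]_N) :=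
  slap_energy (complete_adj N) < slap_energy A.

Section NCCC.
Variables (gT : finGroupType) (G : {group gT}).

Definition nccc_vertices : {set {set gT}} :=
  [set C in classes G | ~~ (C \subset 'Z(G))]%g.

Definition nccc_N : nat := #|nccc_vertices|.

Definition nccc_vertex (i : 'I_nccc_N) : {set gT} := enum_val i.

Definition nccc_adj (i j : 'I_nccc_N) : bool :=
  (i != j) &&
  [forall x in nccc_vertex i, forall y in nccc_vertex j, x * y != y * x]%g.

Definition nccc_adj_mx : 'M[algC]_nccc_N :=
  \matrix_(i, j) (nccc_adj i j)%:R.
End NCCC.

(* Main.v *)
Require Import Defs.
From mathcomp Require Import all_boot all_order all_algebra all_fingroup all_solvable all_field.
From mathcomp Require Import ring.
Set Implicit Arguments. Unset Strict Implicit. Unset Printing Implicit Defensive.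
Import Order.TTheory GRing.Theory Num.Theory.
Local Open Scope ring_scope.

Lemma char_poly_sim (F : fieldType) n (P A B : 'M[F]_n) :
  P \in unitmx -> P *m A = B *m P -> char_poly A = char_poly B.
Proof.
move=> Pu PAB; pose P' := map_mx (@polyC F) P.
have E : P' *m char_poly_mx A = char_poly_mx B *m P'.
  rewrite /char_poly_mx mulmxBr mulmxBl -map_mxM PAB map_mxM.
  by rewrite scalar_mxC.
have := congr1 determinant E; rewrite !det_mulmx mulrC.
have dP : \det P' != 0.
  rewrite det_map_mx polyC_eq0; apply/negP => /eqP d0.
  by move: Pu; rewrite unitmxE d0 unitr0.
by move/(mulIf dP).
Qed.

Lemma spectrum_prod (n : nat) (A : 'M[algC]_n) :
  char_poly A = \prod_(z <- spectrum A) ('X - z%:P).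
Proof.
rewrite /spectrum; case: (closed_field_poly_normal _) => r /= ->.
by rewrite (monicP (char_poly_monic A)) scale1r.
Qed.

Lemma spec_diag (n : nat) (P A : 'M[algC]_n) (d : 'rV[algC]_n) (f : algC -> algC) :
  P \in unitmx -> P *m A = diag_mx d *m P ->
  \sum_(l <- spectrum A) f l = \sum_i f (d 0 i).
Proof.
move=> Pu PA; have := char_poly_sim Pu PA.
rewrite spectrum_prod char_poly_trig ?diag_mx_is_trig //.
have -> : \prod_(i < n) ('X - ((diag_mx d) i i)%:P) =
          \prod_(z <- [seq d 0 i | i <- enum 'I_n]) ('X - z%:P).
  by rewrite big_map big_enum /=; apply: eq_bigr => i _; rewrite mxE eqxx mulr1n.
move/prod_XsubC_eq => pe; rewrite (perm_big _ pe).
by rewrite big_map big_enum.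
Qed.
Lemma spec_conj (n : nat) (P A : 'M[algC]_n) (d : 'rV[algC]_n) (f : algC -> algC) :
  P \in unitmx -> conjmx P A = diag_mx d ->
  \sum_(l <- spectrum A) f l = \sum_i f (d 0 i).
Proof.
move=> Pu Hd; apply: (spec_diag f Pu).
by rewrite -Hd conjumx // mulmxKV.
Qed.

Lemma diag_of_ann n (A : 'M[algC]_n.+1) (rs : seq algC) : uniq rs ->
  horner_mx A (\prod_(x <- rs) ('X - x%:P)) = 0 ->
  exists P d, P \in unitmx /\ conjmx P A = diag_mx d.
Proof.
move=> urs hA.
have : exists2 rs, uniq rs & mxminpoly A %| \prod_(x <- rs) ('X - x%:P).
  by exists rs => //; apply: mxminpoly_min.
move/(diagonalizableP A) => [P Pu /diagonalizable_forPex [d /eqP Hd]].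
by exists P, d.
Qed.

Lemma horner_lin n (A : 'M[algC]_n.+1) x : horner_mx A ('X - x%:P) = A - x%:M.
Proof. by rewrite rmorphB /= horner_mx_X horner_mx_C. Qed.

Lemma diag_cubic n (A : 'M[algC]_n) b c : uniq [:: 0; b; c] ->
  (A *m (A - b%:M)) *m (A - c%:M) = 0 ->
  exists P d, P \in unitmx /\ conjmx P A = diag_mx d.
Proof.
case: n A => [|n] A urs hA.
  exists 1%:M, 0; split; first exact: unitmx1.
  by apply/matrixP => -[].
apply: (diag_of_ann urs).
rewrite !big_cons big_nil !rmorphM /= !horner_lin rmorph1 mulr1.
have -> : (0 : algC)%:M = 0 :> 'M_n.+1 by apply/matrixP => i j; rewrite !mxE mul0rn.
by rewrite subr0 mulrA.
Qed.

Lemma diag_quad n (A : 'M[algC]_n) b : b != 0 ->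
  A *m (A - b%:M) = 0 ->
  exists P d, P \in unitmx /\ conjmx P A = diag_mx d.
Proof.
case: n A => [|n] A nb hA.
  exists 1%:M, 0; split; first exact: unitmx1.
  by apply/matrixP => -[].
apply: (@diag_of_ann _ _ [:: 0; b]); first by rewrite /= inE eq_sym nb.
rewrite !big_cons big_nil !rmorphM /= !horner_lin rmorph1 mulr1.
have -> : (0 : algC)%:M = 0 :> 'M_n.+1 by apply/matrixP => i j; rewrite !mxE mul0rn.
by rewrite subr0.
Qed.

Lemma conjM n (P X Y : 'M[algC]_n) : P \in unitmx ->
  conjmx P (X *m Y) = conjmx P X *m conjmx P Y.
Proof.
move=> Pu; rewrite !conjumx //.
by rewrite !mulmxA mulmxKV.
Qed.

Lemma conjB n (P X : 'M[algC]_n) (b : algC) : P \in unitmx ->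
  conjmx P (X - b%:M) = conjmx P X - b%:M.
Proof.
move=> Pu; rewrite !conjumx // mulmxBr mulmxBl mul_mx_scalar -scalemxAl mulmxV //.
by rewrite scalemx1.
Qed.

Lemma conjD n (P X : 'M[algC]_n) (b : algC) : P \in unitmx ->
  conjmx P (b%:M + X) = b%:M + conjmx P X.
Proof.
move=> Pu; rewrite !conjumx // mulmxDr mulmxDl mul_mx_scalar -scalemxAl mulmxV //.
by rewrite scalemx1.
Qed.

Lemma conj_tr n (P X : 'M[algC]_n) : P \in unitmx -> \tr (conjmx P X) = \tr X.
Proof. by move=> Pu; rewrite conjumx // mxtrace_mulC mulKmx. Qed.

Lemma diag_sub n (d : 'rV[algC]_n) b : diag_mx d - b%:M = diag_mx (\row_i (d 0 i - b)).
Proof.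
apply/matrixP => i j; rewrite !mxE; case: eqP => [->|_]; by rewrite ?mulr1n ?mulr0n ?subrr.
Qed.

Lemma diag_add n (d : 'rV[algC]_n) b : b%:M + diag_mx d = diag_mx (\row_i (b + d 0 i)).
Proof.
apply/matrixP => i j; rewrite !mxE; case: eqP => [->|_]; by rewrite ?mulr1n ?mulr0n ?addr0.
Qed.

Lemma diag_mul n (d e : 'rV[algC]_n) : diag_mx d *m diag_mx e = diag_mx (\row_i (d 0 i * e 0 i)).
Proof.
apply/matrixP => i j; rewrite mul_diag_mx !mxE; case: eqP => [->|_]; by rewrite ?mulr1n ?mulr0n ?mulr0.
Qed.

Lemma diag_vals n (P A : 'M[algC]_n) d b c : P \in unitmx -> conjmx P A = diag_mx d ->
  (A *m (A - b%:M)) *m (A - c%:M) = 0 ->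
  forall i, d 0 i * (d 0 i - b) * (d 0 i - c) = 0.
Proof.
move=> Pu Hd hA i.
have := congr1 (conjmx P) hA; rewrite conjmx0 !conjM // !conjB // Hd !diag_sub !diag_mul.
by move/matrixP => /(_ i i); rewrite !mxE eqxx mulr1n.
Qed.

Lemma diag_tr n (d : 'rV[algC]_n) : \tr (diag_mx d) = \sum_i d 0 i.
Proof. by apply: eq_bigr => i _; rewrite mxE eqxx mulr1n. Qed.

Lemma sum_ind (n : nat) (S : {set 'I_n}) :
  \sum_j ((j \in S)%:R : algC) = #|S|%:R.
Proof.
rewrite (eq_bigr (fun j => if j \in S then 1 else 0)); last by move=> j _; case: (j \in S).
by rewrite -big_mkcond sumr_const.
Qed.

Section Multi.
Variables (N : nat) (T : eqType) (part : 'I_N -> T) (m : nat).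
Hypothesis hm : forall i, #|[set l | part l == part i]| = m.

Definition Amx : 'M[algC]_N := \matrix_(i, j) (part i != part j)%:R.
Definition Jmx : 'M[algC]_N := const_mx 1.
Let a : algC := N%:R - m%:R.

Lemma fiber_sum i : \sum_l ((part l == part i)%:R : algC) = m%:R.
Proof.
by rewrite -(hm i) -sum_ind; apply: eq_bigr => l _; rewrite inE.
Qed.

Lemma Aent i j : Amx i j = 1 - (part j == part i)%:R.
Proof. by rewrite mxE eq_sym; case: (_ == _); rewrite ?subrr ?subr0. Qed.

Lemma rowsumA i : \sum_j Amx i j = a.
Proof.
under eq_bigr do rewrite Aent.
by rewrite sumrB fiber_sum sumr_const card_ord.
Qed.

Lemma colsumA j : \sum_i Amx i j = a.
Proof.
rewrite -(rowsumA j); apply: eq_bigr => i _; by rewrite !mxE eq_sym.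
Qed.

Lemma A2 : Amx *m Amx = a *: Jmx - m%:R *: Amx.
Proof.
apply/matrixP => i j; rewrite !mxE.
have [e|ne] := eqVneq (part i) (part j).
  rewrite /= mulr0 subr0 mulr1 -(rowsumA i); apply: eq_bigr => l _.
  by rewrite !mxE -e eq_sym; case: (_ == _); rewrite ?mulr0 ?mulr1.
rewrite /= mulr1 mulr1.
transitivity (\sum_l (1 - (part l == part i)%:R - (part l == part j)%:R : algC)).
  apply: eq_bigr => l _; rewrite !mxE.
  have [e1|n1] := eqVneq (part i) (part l).
    by rewrite -e1 (negbTE ne) /= mul0r subrr subr0.
  rewrite /= mul1r subr0.
  by case: (part l == part j); rewrite /= ?subr0 ?subrr.
by rewrite !sumrB sumr_const card_ord !fiber_sum.
Qed.

Lemma JA : Jmx *m Amx = a *: Jmx.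
Proof.
apply/matrixP => i j; rewrite !mxE mulr1 -(colsumA j); apply: eq_bigr => l _.
by rewrite !mxE mul1r.
Qed.

Lemma cubic : (Amx *m (Amx + m%:R%:M)) *m (Amx - a%:M) = 0.
Proof.
rewrite [Amx *m (_ + _)]mulmxDr mul_mx_scalar A2 subrK mulmxBr -scalemxAl JA.
by rewrite mul_mx_scalar scalerA subrr.
Qed.

Lemma trA : \tr Amx = 0.
Proof. by apply: big1 => i _; rewrite mxE eqxx. Qed.

Lemma trA2 : \tr (Amx *m Amx) = N%:R * a.
Proof.
rewrite A2 /mxtrace.
under eq_bigr do rewrite !mxE eqxx mulr0 subr0 mulr1.
by rewrite sumr_const card_ord mulr_natl.
Qed.


Lemma conjSub n (P X : 'M[algC]_n) (b : algC) : P \in unitmx ->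
  conjmx P (b%:M - X) = b%:M - conjmx P X.
Proof.
move=> Pu; rewrite !conjumx // mulmxBr mulmxBl mul_mx_scalar -scalemxAl mulmxV //.
by rewrite scalemx1.
Qed.

Lemma diag_rsub n (d : 'rV[algC]_n) b : b%:M - diag_mx d = diag_mx (\row_i (b - d 0 i)).
Proof.
apply/matrixP => i j; rewrite !mxE; case: eqP => [->|_]; by rewrite ?mulr1n ?mulr0n ?subrr.
Qed.

Lemma degA : deg_mx Amx = a%:M.
Proof.
rewrite /deg_mx -diag_const_mx; congr diag_mx; apply/matrixP => i j.
by rewrite !mxE rowsumA.
Qed.

Lemma avgA : (0 < N)%N -> avg_deg Amx = a.
Proof.
move=> hN; have hNC : (N%:R : algC) != 0 by rewrite pnatr_eq0 -lt0n.
rewrite /avg_deg; under eq_bigr do rewrite rowsumA.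
rewrite sumr_const card_ord -mulr_natl; field; exact: hNC.
Qed.

Lemma energies : (0 < N)%N ->
  [/\ energy Amx = 2 * a, lap_energy Amx = 2 * a & slap_energy Amx = 2 * a].
Proof.
move=> hN; pose i0 := Ordinal hN.
have mN : (m <= N)%N.
  by rewrite -(hm i0); apply: leq_trans (max_card _) _; rewrite card_ord.
have m0 : (0 < m)%N.
  by rewrite -(hm i0) card_gt0; apply/set0Pn; exists i0; rewrite inE.
have hNC : (N%:R : algC) != 0 by rewrite pnatr_eq0 -lt0n.
have hmC : (m%:R : algC) != 0 by rewrite pnatr_eq0 -lt0n.
have aE : a = (N - m)%:R by rewrite natrB.
have hcub : (Amx *m (Amx - (- m%:R)%:M)) *m (Amx - a%:M) = 0.
  have -> : Amx - (- m%:R)%:M = Amx + m%:R%:M.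
    by apply/matrixP => k l; rewrite !mxE mulNrn opprK.
  exact: cubic.
have [P [d [Pu Hd]]] : exists P d, P \in unitmx /\ conjmx P Amx = diag_mx d.
  have [a0|an0] := eqVneq a 0.
    apply: (@diag_quad _ _ (- m%:R)); first by rewrite oppr_eq0.
    have := A2; rewrite a0 scale0r sub0r => e.
    rewrite mulmxBr e mul_mx_scalar.
    by apply/matrixP => k l; rewrite !mxE; ring.
  apply: (@diag_cubic _ _ (- m%:R) a); last exact: hcub.
  have h1 : (0:algC) != - m%:R by rewrite eq_sym oppr_eq0.
  have h2 : (0:algC) != a by rewrite eq_sym.
  have h3 : - m%:R != a.
    apply/eqP => e; move: hNC; have -> : (N%:R : algC) = a + m%:R by rewrite /a subrK.
    by rewrite -e addNr eqxx.
  by rewrite /= !inE negb_or h1 h2 h3.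
have sd : \sum_i d 0 i = 0 by rewrite -diag_tr -Hd conj_tr // trA.
have sd2 : \sum_i d 0 i * d 0 i = N%:R * a.
  rewrite -trA2 -(conj_tr _ Pu) conjM // Hd diag_mul diag_tr.
  by apply: eq_bigr => i _; rewrite mxE.
have vals i : `|d 0 i| = ((2 * m%:R - N%:R) * d 0 i + 2 * (d 0 i * d 0 i)) / N%:R.
  have /eqP := diag_vals Pu Hd hcub i.
  rewrite !mulf_eq0 !subr_eq0 => /orP [/orP [/eqP->|/eqP->]|/eqP->].
  - by rewrite normr0; field; exact: hNC.
  - rewrite normrN normr_nat; field; exact: hNC.
  - rewrite {1}aE normr_nat -aE /a; field; exact: hNC.
have E0 : \sum_i `|d 0 i| = 2 * a.
  under eq_bigr do rewrite vals.
  rewrite -mulr_suml big_split /= -!mulr_sumr sd sd2; field; exact: hNC.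
split.
- by rewrite /energy (spec_conj _ Pu Hd).
- have HL : conjmx P (lap_mx Amx) = diag_mx (\row_i (a - d 0 i)).
    by rewrite /lap_mx degA conjSub // Hd diag_rsub.
  rewrite /lap_energy (spec_conj _ Pu HL) avgA // -E0.
  by apply: eq_bigr => i _; rewrite mxE -normrN; congr `|_|; ring.
- have HQ : conjmx P (slap_mx Amx) = diag_mx (\row_i (a + d 0 i)).
    by rewrite /slap_mx degA conjD // Hd diag_add.
  rewrite /slap_energy (spec_conj _ Pu HQ) avgA // -E0.
  by apply: eq_bigr => i _; rewrite mxE; congr `|_|; ring.
Qed.

End Multi.
Local Close Scope ring_scope.
Lemma nat_p2 p s t : prime p -> s * t = p ^ 2 -> s != 1 -> t != 1 -> s = p.
Proof.
move=> pp e s1 t1.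
have : s %| p ^ 2 by rewrite -e dvdn_mulr.
case/(dvdn_pfactor _ _ pp) => k kle sE; subst s.
have p0 := prime_gt0 pp.
move: kle s1 e; case: k => [|[|[|k]]] //= _ _ /eqP.
rewrite -{2}(muln1 (p ^ 2)) eqn_pmul2l ?expn_gt0 ?p0 //.
by move/eqP => t1'; move: t1; rewrite t1' eqxx.
Qed.

Lemma nat_p1 p s t : prime p -> s * t = p -> t != 1 -> s = 1.
Proof.
move=> pp e t1.
have : t %| p by rewrite -e dvdn_mull.
case/primeP: pp => p1 /[apply] /orP [/eqP t1'|/eqP tp]; first by move: t1; rewrite t1' eqxx.
by move: e; rewrite tp -{2}(mul1n p) => /eqP; rewrite eqn_pmul2r ?(leq_trans _ p1) // => /eqP.
Qed.

Section Grp.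
Open Scope group_scope.
Variables (gT : finGroupType) (G : {group gT}) (p : nat).
Hypotheses (pp : prime p) (iso : (G / 'Z(G)) \isog setX (Zp p) (Zp p)).

Let Z := 'Z(G).

Lemma cardGZ : #|G : Z| = (p ^ 2)%N.
Proof.
rewrite -card_quotient ?normal_norm ?center_normal //.
by rewrite (card_isog iso) cardsX card_Zp ?prime_gt0 // mulnn.
Qed.

Lemma abGZ : abelian (G / Z).
Proof.
apply: (card_p2group_abelian pp).
by rewrite card_quotient ?normal_norm ?center_normal // cardGZ.
Qed.

Lemma commZ x g : x \in G -> g \in G -> [~ x, g] \in Z.
Proof.
move=> xG gG.
have sub : G^`(1) \subset Z by apply: der1_min; rewrite ?normal_norm ?center_normal ?abGZ.
by apply: (subsetP sub); rewrite derg1 mem_commg.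
Qed.

Lemma ZsubC x : x \in G -> Z \subset 'C_G[x].
Proof.
move=> xG; apply/subsetP => z /centerP [zG cz].
by rewrite inE zG; apply/cent1P; apply: cz.
Qed.

Lemma notZ_sub x : x \in G -> x \notin Z -> ~~ (G \subset 'C_G[x]).
Proof.
move=> xG xZ; apply: contra xZ => sGC.
apply/centerP; split => // y yG.
by have := subsetP sGC y yG; rewrite inE => /andP [_ /cent1P c]; apply: commute_sym.
Qed.

Lemma idx_CZ x : x \in G -> x \notin Z -> #|'C_G[x] : Z| = p /\ #|G : 'C_G[x]| = p.
Proof.
move=> xG xZ.
have e := Lagrange_index (subsetIl G 'C[x]) (ZsubC xG).
rewrite cardGZ in e.
have n1 : #|G : 'C_G[x]| != 1%N by rewrite indexg_eq1 notZ_sub.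
have n2 : #|'C_G[x] : Z| != 1%N.
  rewrite indexg_eq1; apply: contra xZ => sub; apply: (subsetP sub).
  by apply/setIP; split => //; exact: cent1id.
have h1 := nat_p2 pp e n1 n2.
rewrite mulnC in e; have h2 := nat_p2 pp e n2 n1.
by [].
Qed.

Lemma cardC x : x \in G -> x \notin Z -> (#|'C_G[x]| * p)%N = #|G|.
Proof.
move=> xG xZ; have [_ <-] := idx_CZ xG xZ.
by rewrite Lagrange ?subsetIl.
Qed.

Lemma centEq x y : x \in G -> x \notin Z -> y \in G -> y \notin Z ->
  commute x y -> 'C_G[x] = 'C_G[y].
Proof.
suff H : forall x y, x \in G -> x \notin Z -> y \in G -> y \notin Z ->
  commute x y -> 'C_G[x] \subset 'C_G[y].
  move=> xG xZ yG yZ cxy; apply/eqP; rewrite eqEsubset !H //.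
move=> {}x {}y xG xZ yG yZ cxy.
pose K := ('C_G[x] :&: 'C_G[y])%G.
have sKC : K \subset 'C_G[x] by apply: subsetIl.
have sZK : Z \subset K by rewrite subsetI !ZsubC.
have e := Lagrange_index sKC sZK.
have [ip _] := idx_CZ xG xZ; rewrite ip in e.
have nK : #|K : Z| != 1%N.
  rewrite indexg_eq1; apply: contra xZ => sub; apply: (subsetP sub).
  apply/setIP; split; apply/setIP; split => //; first exact: cent1id.
  by apply/cent1P; apply: commute_sym.
have := nat_p1 pp e nK; move/eqP; rewrite indexg_eq1 => sCK.
by apply: subset_trans sCK (subsetIr _ _).
Qed.

Lemma centJ x g : x \in G -> g \in G -> 'C_G[x ^ g] = 'C_G[x].
Proof.
move=> xG gG; rewrite conjg_mulR.
have /centerP [zG cz] := commZ xG gG.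
set z := [~ x, g] in zG cz *.
apply/setP => y; rewrite !in_setI; case yG : (y \in G) => //=.
apply/cent1P/cent1P => c.
- have : commute y (x * z * z^-1) by apply: commuteM => //; apply/commuteV/commute_sym/cz.
  by rewrite mulgK.
- by apply: commuteM => //; apply/commute_sym/cz.
Qed.

Lemma fixZ z h : z \in Z -> h \in G -> z ^ h = z.
Proof.
move=> /centerP [_ cz] hG.
have := cz h hG; move/commgP/eqP => e.
by rewrite conjg_mulR e mulg1.
Qed.

Lemma class_facts C x : C \in classes G -> x \in C -> ~~ (C \subset Z) ->
  [/\ x \in G, x \notin Z & 'C_G[repr C] = 'C_G[x]].
Proof.
case/imsetP => x0 x0G -> xC nCZ.
have x0Z : x0 \notin Z.
  apply: contra nCZ => x0Z; apply/subsetP => y /imsetP [h hG ->].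
  by rewrite fixZ.
case/imsetP: xC => g gG ->.
have /imsetP [h hG ->] := mem_repr _ (class_refl G x0).
split; first exact: groupJ.
- apply: contra x0Z => xgZ.
  by have := fixZ xgZ (groupVr gG); rewrite conjgK => ->.
- by rewrite !centJ.
Qed.

Definition part (i : 'I_(nccc_N G)) := 'C_G[repr (nccc_vertex i)].

Lemma vert_facts (i : 'I_(nccc_N G)) : nccc_vertex i \in classes G /\ ~~ (nccc_vertex i \subset Z).
Proof.
have := enum_valP i; rewrite inE => /andP [] h1 h2.
by split.
Qed.

Lemma adjE (i j : 'I_(nccc_N G)) : nccc_adj i j = (part i != part j).
Proof.
rewrite /nccc_adj.
have [ci ni] := vert_facts i; have [cj nj] := vert_facts j.
apply/idP/idP.
- case/andP => ij /forallP H; apply/negP => /eqP e.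
  have x0C := mem_repr_classes ci; have y0C := mem_repr_classes cj.
  have [x0G x0Z _] := class_facts ci x0C ni.
  have [y0G y0Z _] := class_facts cj y0C nj.
  have := H (repr (nccc_vertex i)); rewrite x0C /= => /forallP /(_ (repr (nccc_vertex j))).
  rewrite y0C /= => /eqP; apply.
  have : repr (nccc_vertex j) \in part i.
    by rewrite e; apply/setIP; split => //; apply: cent1id.
  by case/setIP => _ /cent1P c; apply: commute_sym.
- move=> npe.
  have -> : i != j by apply: contraNneq npe => ->.
  apply/forallP => x; apply/implyP => xCi; apply/forallP => y; apply/implyP => yCj.
  apply/eqP => c.
  have [xG xZ ex] := class_facts ci xCi ni.
  have [yG yZ ey] := class_facts cj yCj nj.
  move: npe; rewrite /part ex ey (centEq xG xZ yG yZ c) eqxx.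
  by [].
Qed.

Lemma fiber (i : 'I_(nccc_N G)) : #|[set l | part l == part i]| = ((#|G| %/ p - #|Z|) %/ p)%N.
Proof.
have [ci ni] := vert_facts i.
have x0C := mem_repr_classes ci.
have [x0G x0Z _] := class_facts ci x0C ni.
set x0 := repr (nccc_vertex i) in x0C x0G x0Z.
set H := part i.
have HE : H = 'C_G[x0] by [].
pose S := [set C in nccc_vertices G | 'C_G[repr C] == H].
have cS : #|[set l | part l == H]| = #|S|.
  rewrite -!sum1_card.
  rewrite (eq_bigl (fun l => part l == H)); last by move=> l; rewrite inE.
  rewrite (eq_bigl (fun C => (C \in nccc_vertices G) && ('C_G[repr C] == H))); last by move=> C; rewrite inE.
  by rewrite big_enum_val_cond.
have trS : trivIset S.
  apply: trivIsetS (_ : S \subset classes G) _.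
    by apply/subsetP => C; rewrite !inE => /andP [/andP [cC _] _].
  by case/and3P: (classes_partition G).
have partS : partition S (H :\: Z).
  apply/and3P; split => //.
  - apply/eqP/setP => x; apply/bigcupP/idP.
    + case=> C CS xC; rewrite !inE in CS; case/andP: CS => /andP [cC nC] /eqP cH.
      have [xG xZ ex] := class_facts cC xC nC.
      rewrite in_setD xZ /= -cH ex; apply/setIP; split => //; exact: cent1id.
    + rewrite in_setD => /andP [xZ xH].
      have xG : x \in G by move: xH; rewrite HE => /setIP [].
      have nC : ~~ (x ^: G \subset Z).
        by apply: contra xZ => s; apply: (subsetP s); apply: class_refl.
      exists (x ^: G); last exact: class_refl.
      rewrite !inE mem_classes //= nC /=.
      have [_ _ ->] := class_facts (mem_classes xG) (class_refl G x) nC.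
      rewrite HE; apply/eqP; apply: centEq => //.
      by move: xH; rewrite HE => /setIP [_ /cent1P].
  - apply/negP; rewrite !inE => /andP [/andP [_ /negP n] _]; apply: n; exact: sub0set.
have cardS : (#|S| * p)%N = (#|H| - #|Z|)%N.
  rewrite -(setIidPr (_ : Z \subset H)); last by rewrite HE ZsubC.
  rewrite -cardsD (card_partition partS) -sum_nat_const.
  apply: eq_bigr => C; rewrite !inE => /andP [/andP [cC nC] _].
  move: (cC) nC => /imsetP [y yG ->] nC.
  have [_ yZ _] := class_facts (mem_classes yG) (class_refl G y) nC.
  by rewrite -index_cent1; have [_ ->] := idx_CZ yG yZ.
have cH : (#|H| * p)%N = #|G| by rewrite HE; apply: cardC.
rewrite cS -(mulnK #|S| (prime_gt0 pp)) cardS -cH mulnK ?prime_gt0 //.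
Qed.

Lemma N_pos : ~~ abelian G -> (0 < nccc_N G)%N.
Proof.
move=> nab.
have : ~~ (G \subset Z).
  apply: contra nab => s; apply/center_idP; apply/eqP; rewrite eqEsubset center_sub s.
  by [].
case/subsetPn => x xG xZ.
rewrite /nccc_N card_gt0; apply/set0Pn; exists (x ^: G).
rewrite !inE mem_classes //=.
by apply: contra xZ => s; apply: (subsetP s); apply: class_refl.
Qed.

End Grp.
Local Open Scope ring_scope.

Theorem theorem4p1 (gT : finGroupType) (G : {group gT}) (p : nat) :
  prime p -> ~~ abelian G ->
  (G / 'Z(G))%g \isog setX (Zp p) (Zp p) ->
  ~ hyperenergetic (nccc_adj_mx G) /\
  ~ L_hyperenergetic (nccc_adj_mx G) /\
  ~ Q_hyperenergetic (nccc_adj_mx G).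
Proof.
move=> pp nab iso.
have hN := N_pos nab.
set N := nccc_N G in hN *.
have eA : nccc_adj_mx G = Amx (@part _ G).
  by apply/matrixP => i j; rewrite !mxE (adjE pp iso).
have hK : complete_adj N = Amx (fun i : 'I_N => i).
  by apply/matrixP => i j; rewrite !mxE.
have hm1 : forall i : 'I_N, #|[set l | (fun i : 'I_N => i) l == (fun i : 'I_N => i) i]| = 1%N.
  by move=> i; rewrite -(cards1 i); apply: eq_card => l; rewrite !inE.
have [E1 L1 Q1] := energies (fiber pp iso) hN.
have [E2 L2 Q2] := energies hm1 hN.
set m := ((#|G| %/ p - #|'Z(G)%g|) %/ p)%N in E1 L1 Q1.
have m1 : (1 <= m)%N.
  rewrite /m -(fiber pp iso (Ordinal hN)) card_gt0; apply/set0Pn.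
  by exists (Ordinal hN); rewrite inE.
have le : 2 * (N%:R - m%:R) <= 2 * (N%:R - 1%:R) :> algC.
  by rewrite ler_pM2l ?ltr0n // lerD2l lerN2 ler1n.
rewrite /hyperenergetic /L_hyperenergetic /Q_hyperenergetic eA hK E1 L1 Q1 E2 L2 Q2.
by rewrite le_gtF.
Qed.
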